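(* Consider a one-site PTM cascade with $n=1$ layer, with rate constants and $\overline{E},\overline{F}>0$ fixed, and let $T=c^1\overline{F}-c^0\overline{E}$. Consider the BMSS values of $S^1$ and $S^0$ as functions of $\overline{S}\in(0,\infty)$. Then both are strictly increasing in $\overline{S}$, and as $\overline{S}\to+\infty$: (i) if $T<0$, then $S^1\to+\infty$ and $S^0\to-\lambda\overline{F}/\Delta\in(0,\infty)$; (ii) if $T>0$, then $S^1\to\overline{E}/\Delta$ and $S^0\to+\infty$; (iii) if $T=0$, then both $S^1\to+\infty$ and $S^0\to+\infty$; where $\Delta=\gamma\overline{F}-\delta\overline{E}=(\delta/c^0)T$.
   Context: For $n=1$ the one-site PTM cascade has species $E,S^0,S^1,F,Y^0,Y^1$ with reactions $E+S^0\rightleftharpoons Y^0\to E+S^1$ (rate constants $a^0$ forward, $b^0$ backward, $c^0$ catalytic) and $F+S^1\rightleftharpoons Y^1\to F+S^0$ (rate constants $a^1,b^1,c^1$), all positive, mass-action kinetics. Put $\delta=a^1/(b^1+c^1)$, $\gamma=(c^1/c^0)\delta$, $\lambda=\frac{b^0+c^0}{a^0}\gamma$. A steady state for total amounts $\overline{E},\overline{F},\overline{S}$ is a real solution of $Y^0=\gamma FS^1$, $Y^1=\delta FS^1$, $\lambda FS^1=S^0E$, $\overline{F}=F+Y^1$, $\overline{E}=E+Y^0$, $\overline{S}=S^0+S^1+Y^0+Y^1$. A BMSS is a steady state with positive total amounts and all concentrations nonnegative; for positive total amounts it exists and is unique. *)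

(* Defs.v *)
From Stdlib Require Import Reals Lra.
Open Scope R_scope.

Definition delta (a1 b1 c1 : R) : R := a1 / (b1 + c1).
Definition gamma (c0 a1 b1 c1 : R) : R := (c1 / c0) * delta a1 b1 c1.
Definition lambda (a0 b0 c0 a1 b1 c1 : R) : R :=
  ((b0 + c0) / a0) * gamma c0 a1 b1 c1.

Definition steady_state (a0 b0 c0 a1 b1 c1 Eb Fb Sb E S0 S1 F Y0 Y1 : R) : Prop :=
  Y0 = gamma c0 a1 b1 c1 * F * S1 /\
  Y1 = delta a1 b1 c1 * F * S1 /\
  lambda a0 b0 c0 a1 b1 c1 * F * S1 = S0 * E /\
  Fb = F + Y1 /\
  Eb = E + Y0 /\
  Sb = S0 + S1 + Y0 + Y1.

Definition BMSS (a0 b0 c0 a1 b1 c1 Eb Fb Sb E S0 S1 F Y0 Y1 : R) : Prop :=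
  steady_state a0 b0 c0 a1 b1 c1 Eb Fb Sb E S0 S1 F Y0 Y1 /\
  0 < Eb /\ 0 < Fb /\ 0 < Sb /\
  0 <= E /\ 0 <= S0 /\ 0 <= S1 /\ 0 <= F /\ 0 <= Y0 /\ 0 <= Y1.

Definition tends_to_at_pinfty (f : R -> R) (l : R) : Prop :=
  forall eps, 0 < eps -> exists M, forall x, M < x -> Rabs (f x - l) < eps.
Definition tends_to_pinfty_at_pinfty (f : R -> R) : Prop :=
  forall A, exists M, forall x, M < x -> A < f x.

Definition strictly_increasing_pos (f : R -> R) : Prop :=
  forall x y, 0 < x -> x < y -> f x < f y.

(* Main.v *)
Require Import Defs.
From Stdlib Require Import Reals.
From Stdlib Require Import Lra Psatz.
Open Scope R_scope.

Lemma key (a0 b0 c0 a1 b1 c1 Eb Fb Sb E S0 S1 F Y0 Y1 : R) :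
  0 < lambda a0 b0 c0 a1 b1 c1 -> 0 < delta a1 b1 c1 ->
  BMSS a0 b0 c0 a1 b1 c1 Eb Fb Sb E S0 S1 F Y0 Y1 ->
  0 <= S1 /\ 0 <= S0 /\ exists u, 0 <= u /\
    u * (1 + delta a1 b1 c1 * S1) = Fb * S1 /\
    0 < Eb - gamma c0 a1 b1 c1 * u /\
    S0 * (Eb - gamma c0 a1 b1 c1 * u) = lambda a0 b0 c0 a1 b1 c1 * u /\
    Sb = S0 + S1 + (gamma c0 a1 b1 c1 + delta a1 b1 c1) * u.
Proof.
  intros hl hd [[h1 [h2 [h3 [h4 [h5 h6]]]]] [hE [hF [hS [e1 [e2 [e3 [e4 [e5 e6]]]]]]]]].
  split; [lra|]. split; [lra|].
  exists (F * S1). split; [nra|]. split.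
  { rewrite h4, h2. ring. }
  assert (HE : E = Eb - gamma c0 a1 b1 c1 * (F * S1)) by (rewrite h5, h1; ring).
  rewrite <- HE. split.
  { destruct e1 as [e1|e1]; [lra|]. subst E.
    assert (F * S1 = 0).
    { assert (lambda a0 b0 c0 a1 b1 c1 * (F * S1) = 0) by (rewrite <- Rmult_assoc, h3; ring).
      apply Rmult_integral in H. destruct H; lra. }
    rewrite H in HE. lra. }
  split. { rewrite <- h3. ring. }
  rewrite h6, h1, h2. ring.
Qed.

Theorem mainTheorem12 (a0 b0 c0 a1 b1 c1 Eb Fb : R)
  (ha0 : 0 < a0) (hb0 : 0 < b0) (hc0 : 0 < c0)
  (ha1 : 0 < a1) (hb1 : 0 < b1) (hc1 : 0 < c1)
  (hEb : 0 < Eb) (hFb : 0 < Fb)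
  (s0 s1 : R -> R)
  (hs : forall Sb, 0 < Sb -> exists E F Y0 Y1,
        BMSS a0 b0 c0 a1 b1 c1 Eb Fb Sb E (s0 Sb) (s1 Sb) F Y0 Y1) :
  let T := c1 * Fb - c0 * Eb in
  let Delta := gamma c0 a1 b1 c1 * Fb - delta a1 b1 c1 * Eb in
  let lam := lambda a0 b0 c0 a1 b1 c1 in
  Delta = (delta a1 b1 c1 / c0) * T /\
  strictly_increasing_pos s1 /\ strictly_increasing_pos s0 /\
  (T < 0 ->
     tends_to_pinfty_at_pinfty s1 /\
     0 < - lam * Fb / Delta /\
     tends_to_at_pinfty s0 (- lam * Fb / Delta)) /\
  (T > 0 ->
     tends_to_at_pinfty s1 (Eb / Delta) /\
     tends_to_pinfty_at_pinfty s0) /\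
  (T = 0 ->
     tends_to_pinfty_at_pinfty s1 /\
     tends_to_pinfty_at_pinfty s0).
Proof.
  cbv zeta.
  assert (hd : 0 < delta a1 b1 c1) by (unfold delta; apply Rdiv_lt_0_compat; lra).
  assert (hg : 0 < gamma c0 a1 b1 c1) by
    (unfold gamma; apply Rmult_lt_0_compat; [apply Rdiv_lt_0_compat; lra| exact hd]).
  assert (hl : 0 < lambda a0 b0 c0 a1 b1 c1) by
    (unfold lambda; apply Rmult_lt_0_compat; [apply Rdiv_lt_0_compat; lra| exact hg]).
  assert (hk : forall Sb, 0 < Sb -> 0 <= s1 Sb /\ 0 <= s0 Sb /\ exists u, 0 <= u /\
    u * (1 + delta a1 b1 c1 * s1 Sb) = Fb * s1 Sb /\
    0 < Eb - gamma c0 a1 b1 c1 * u /\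
    s0 Sb * (Eb - gamma c0 a1 b1 c1 * u) = lambda a0 b0 c0 a1 b1 c1 * u /\
    Sb = s0 Sb + s1 Sb + (gamma c0 a1 b1 c1 + delta a1 b1 c1) * u).
  { intros Sb HS. destruct (hs Sb HS) as [E [F [Y0 [Y1 HB]]]].
    eapply key; eauto. }
  assert (HD : gamma c0 a1 b1 c1 * Fb - delta a1 b1 c1 * Eb =
               delta a1 b1 c1 / c0 * (c1 * Fb - c0 * Eb)).
  { unfold gamma. field. lra. }
  clear hs.
  set (d := delta a1 b1 c1) in *.
  set (g := gamma c0 a1 b1 c1) in *.
  set (l := lambda a0 b0 c0 a1 b1 c1) in *.
  assert (hf : forall Sb, 0 < Sb -> 0 <= s1 Sb /\ 0 <= s0 Sb /\ exists u, 0 <= u /\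
    u * (1 + d * s1 Sb) = Fb * s1 Sb /\
    0 < Eb - g * u /\
    s0 Sb * (Eb - g * u) = l * u /\
    Sb = s0 Sb + s1 Sb + (g + d) * u /\
    (Fb - d*u) * (1 + d * s1 Sb) = Fb /\
    (Eb - g*u) * (1 + d * s1 Sb) = Eb - (g*Fb - d*Eb) * s1 Sb /\
    0 < Fb - d*u /\ (g+d)*u <= (g+d)*Fb/d /\ 0 < 1 + d * s1 Sb).
  { intros Sb HS. destruct (hk Sb HS) as [x0 [s00 [u [u0 [u1 [u2 [u3 u4]]]]]]].
    split; [exact x0|]. split; [exact s00|]. exists u.
    assert (w1 : (Fb - d*u) * (1 + d * s1 Sb) = Fb).
    { transitivity (Fb*(1+d*s1 Sb) - d*(u*(1+d*s1 Sb))); [ring|rewrite u1; ring]. }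
    assert (w2 : (Eb - g*u) * (1 + d * s1 Sb) = Eb - (g*Fb - d*Eb) * s1 Sb).
    { transitivity (Eb*(1+d*s1 Sb) - g*(u*(1+d*s1 Sb))); [ring|rewrite u1; ring]. }
    assert (p : 0 < 1 + d * s1 Sb) by nra.
    assert (w3 : 0 < Fb - d*u) by nra.
    assert (w4 : u <= Fb/d).
    { apply Rmult_le_reg_r with d; [lra|]. replace (Fb/d*d) with Fb by (field; lra). lra. }
    assert (w5 : (g+d)*u <= (g+d)*Fb/d).
    { unfold Rdiv. rewrite Rmult_assoc. apply Rmult_le_compat_l; lra. }
    repeat split; assumption. }
  clear hk.
  assert (M1 : strictly_increasing_pos s1).
  { intros Sa Sb Ha Hab.
    destruct (hf Sa Ha) as [xa0 [sa0 [ua [ua0 [ua1 [ua2 [ua3 [ua4 _]]]]]]]].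
    destruct (hf Sb ltac:(lra)) as [xb0 [sb0 [ub [ub0 [ub1 [ub2 [ub3 [ub4 _]]]]]]]].
    destruct (Rlt_or_le (s1 Sa) (s1 Sb)) as [H|H]; [exact H|exfalso].
    assert (Hq : (ub - ua) * ((1 + d * s1 Sa) * (1 + d * s1 Sb)) = Fb * (s1 Sb - s1 Sa)).
    { transitivity (ub * (1 + d * s1 Sb) * (1 + d * s1 Sa) - ua * (1 + d * s1 Sa) * (1 + d * s1 Sb)); [ring|].
      rewrite ub1, ua1. ring. }
    assert (Hp : 0 < (1 + d * s1 Sa) * (1 + d * s1 Sb)) by (apply Rmult_lt_0_compat; nra).
    assert (Hu : ub <= ua) by nra.
    assert (Hs : s0 Sb <= s0 Sa).
    { destruct (Rlt_or_le (s0 Sa) (s0 Sb)) as [H2|H2]; [|exact H2]. exfalso.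
      assert (h1 : s0 Sb * (Eb - g * ua) <= s0 Sb * (Eb - g * ub)) by
        (apply Rmult_le_compat_l; nra).
      assert (h2 : s0 Sa * (Eb - g * ua) < s0 Sb * (Eb - g * ua)) by
        (apply Rmult_lt_compat_r; lra).
      assert (l * ua < l * ub) by lra. nra. }
    assert ((g+d)*ub <= (g+d)*ua) by (apply Rmult_le_compat_l; lra). lra. }
  split; [exact HD|].
  split; [exact M1|].
  split.
  { intros Sa Sb Ha Hab.
    pose proof (M1 Sa Sb Ha Hab) as H.
    destruct (hf Sa Ha) as [xa0 [sa0 [ua [ua0 [ua1 [ua2 [ua3 [ua4 _]]]]]]]].
    destruct (hf Sb ltac:(lra)) as [xb0 [sb0 [ub [ub0 [ub1 [ub2 [ub3 [ub4 _]]]]]]]].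
    assert (Hq : (ub - ua) * ((1 + d * s1 Sa) * (1 + d * s1 Sb)) = Fb * (s1 Sb - s1 Sa)).
    { transitivity (ub * (1 + d * s1 Sb) * (1 + d * s1 Sa) - ua * (1 + d * s1 Sa) * (1 + d * s1 Sb)); [ring|].
      rewrite ub1, ua1. ring. }
    assert (Hp : 0 < (1 + d * s1 Sa) * (1 + d * s1 Sb)) by (apply Rmult_lt_0_compat; nra).
    assert (Hu : ua < ub) by nra.
    destruct (Rlt_or_le (s0 Sa) (s0 Sb)) as [H2|H2]; [exact H2|]. exfalso.
    assert (h1 : s0 Sb * (Eb - g * ub) <= s0 Sa * (Eb - g * ub)) by
      (apply Rmult_le_compat_r; lra).
    assert (h2 : s0 Sa * (Eb - g * ub) <= s0 Sa * (Eb - g * ua)) by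
      (apply Rmult_le_compat_l; nra).
    assert (l * ub <= l * ua) by lra. nra. }
  set (C := (g+d)*Fb/d).
  assert (hC : 0 < C) by (unfold C; apply Rdiv_lt_0_compat; nra).
  assert (hdc : 0 < d / c0) by (apply Rdiv_lt_0_compat; lra).
  split.
  {
    intros HT.
    assert (HDn : g * Fb - d * Eb < 0) by (rewrite HD; nra).
    set (D := - (g * Fb - d * Eb)).
    assert (hD : 0 < D) by (unfold D; lra).
    set (L := l * Fb / D).
    assert (HL : - l * Fb / (g * Fb - d * Eb) = L) by (unfold L, D; field; lra).
    rewrite HL.
    assert (hL : 0 < L) by (unfold L; apply Rdiv_lt_0_compat; nra).
    assert (sb : forall Sb, 0 < Sb -> L - s0 Sb > 0 /\ (L - s0 Sb) * D = l*Fb - s0 Sb * D).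
    { intros Sb HS.
      destruct (hf Sb HS) as [x0 [s00 [u [u0 [u1 [u2 [u3 [u4 [w1 [w2 [w3 [w5 p]]]]]]]]]]]].
      assert (e : (L - s0 Sb) * D = l*Fb - s0 Sb * D) by (unfold L; field; lra).
      split; [|exact e].
      assert (e2 : (Eb - g*u) * (l*Fb - s0 Sb * D) = l * Eb * (Fb - d*u)).
      { transitivity (l*Fb*(Eb - g*u) - (s0 Sb * (Eb - g*u)) * D); [ring|].
        rewrite u3. unfold D. ring. }
      assert (0 < l*Fb - s0 Sb * D).
      { assert (0 < l * Eb * (Fb - d*u)) by (apply Rmult_lt_0_compat; nra). nra. }
      nra. }
    split.
    { intros A. exists (Rmax 0 (A + L + C)). intros x Hx.
      apply Rmax_Rlt in Hx. destruct Hx as [Hx1 Hx2].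
      destruct (hf x Hx1) as [x0 [s00 [u [u0 [u1 [u2 [u3 [u4 [w1 [w2 [w3 [w5 p]]]]]]]]]]]].
      destruct (sb x Hx1). fold C in w5. lra. }
    split; [exact hL|].
    intros eps heps.
    set (X := l*Eb*Fb/(eps*D*D)).
    assert (hX : X * (eps*D*D) = l*Eb*Fb) by (unfold X; field; lra).
    exists (Rmax 0 (X + L + C)). intros x Hx.
    apply Rmax_Rlt in Hx. destruct Hx as [Hx1 Hx2].
    destruct (hf x Hx1) as [x0 [s00 [u [u0 [u1 [u2 [u3 [u4 [w1 [w2 [w3 [w5 p]]]]]]]]]]]].
    destruct (sb x Hx1) as [sb1 sb2]. fold C in w5.
    assert (hx : X < s1 x) by lra.
    rewrite Rabs_left by lra.
    set (w := Fb - d*u) in *.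
    set (E := Eb - g*u) in *.
    set (y := s1 x) in *.
    assert (hDD : 0 < eps*D*D) by (repeat apply Rmult_lt_0_compat; lra).
    assert (k1 : l*Eb*Fb < eps*D*D*y) by nra.
    assert (k2 : d*l*Eb*w*(1+d*y) < eps*D*D*(1+d*y)).
    { replace (d*l*Eb*w*(1+d*y)) with (d*(l*Eb*Fb)) by (rewrite <- w1; ring). nra. }
    assert (k3 : d*l*Eb*w < eps*D*D) by nra.
    assert (k4 : D <= d*E) by (unfold E, D; unfold w in w3; nra).
    assert (k5 : eps*D*D <= eps*D*(d*E)).
    { assert (0 < eps*D) by nra. nra. }
    assert (k6 : l*Eb*w < eps*D*E) by nra.
    assert (k7 : (L - s0 x) * D * E = l*Eb*w).
    { rewrite sb2. unfold w, D.
      transitivity (l*Fb*E + (s0 x * E) * (g * Fb - d * Eb)); [ring|].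
      rewrite u3. unfold E. ring. }
    assert (0 < D*E) by nra.
    nra. }
  split.
  {
    intros HT.
    assert (HDp : 0 < g * Fb - d * Eb) by (rewrite HD; nra).
    set (Dl := g * Fb - d * Eb) in *.
    assert (sb : forall Sb, 0 < Sb -> s1 Sb < Eb / Dl).
    { intros Sb HS.
      destruct (hf Sb HS) as [x0 [s00 [u [u0 [u1 [u2 [u3 [u4 [w1 [w2 [w3 [w5 p]]]]]]]]]]]].
      apply Rmult_lt_reg_r with Dl; [lra|]. replace (Eb/Dl*Dl) with Eb by (field; lra).
      nra. }
    split.
    { intros eps heps.
      set (Y := l*Fb*Eb/(eps*Dl*Dl)).
      assert (hY : Y * (eps*Dl*Dl) = l*Fb*Eb) by (unfold Y; field; lra).
      assert (hY0 : 0 < Y) by (unfold Y; apply Rdiv_lt_0_compat; [assert (0 < l*Fb) by nra; nra|]; repeat apply Rmult_lt_0_compat; lra).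
      exists (Rmax 0 (Y + Eb/Dl + C)). intros x Hx.
      apply Rmax_Rlt in Hx. destruct Hx as [Hx1 Hx2].
      pose proof (sb x Hx1) as sbx.
      destruct (hf x Hx1) as [x0 [s00 [u [u0 [u1 [u2 [u3 [u4 [w1 [w2 [w3 [w5 p]]]]]]]]]]]].
      fold C in w5.
      assert (hs0 : Y < s0 x) by lra.
      rewrite Rabs_left by lra.
      set (y := s1 x) in *. set (E := Eb - g*u) in *.
      set (K := Eb - Dl * y).
      assert (k1 : s0 x * K = l*Fb*y).
      { unfold K. rewrite <- w2. transitivity ((s0 x * E) * (1 + d*y)); [ring|].
        rewrite u3. rewrite Rmult_assoc, u1. ring. }
      assert (k0 : Dl * y < Eb).
      { apply Rmult_lt_reg_r with (/Dl).
        - apply Rinv_0_lt_compat; lra.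
        - replace (Dl*y*/Dl) with y by (field; lra). exact sbx. }
      assert (k2 : l*Fb*y*Dl < l*Fb*Eb).
      { assert (0 < l*Fb) by nra. nra. }
      assert (k3 : s0 x * K * Dl < s0 x * (eps*Dl) * Dl).
      { rewrite k1. assert (l*Fb*Eb < s0 x * (eps*Dl*Dl)).
        { rewrite <- hY. apply Rmult_lt_compat_r; [repeat apply Rmult_lt_0_compat; lra|lra]. }
        nra. }
      assert (k4 : K < eps*Dl).
      { assert (0 < s0 x * Dl) by nra. nra. }
      assert (k5 : (Eb/Dl - y) * Dl = K) by (unfold K; field; lra).
      nra. }
    intros A. exists (Rmax 0 (A + Eb/Dl + C)). intros x Hx.
    apply Rmax_Rlt in Hx. destruct Hx as [Hx1 Hx2].
    pose proof (sb x Hx1) as sbx.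
    destruct (hf x Hx1) as [x0 [s00 [u [u0 [u1 [u2 [u3 [u4 [w1 [w2 [w3 [w5 p]]]]]]]]]]]].
    fold C in w5. lra. }
  intros HT.
  assert (HD0 : g * Fb - d * Eb = 0) by (rewrite HD, HT; ring).
  assert (sb : forall Sb, 0 < Sb -> s0 Sb * Eb = l*Fb*s1 Sb /\ Sb <= s0 Sb + s1 Sb + C).
  { intros Sb HS.
    destruct (hf Sb HS) as [x0 [s00 [u [u0 [u1 [u2 [u3 [u4 [w1 [w2 [w3 [w5 p]]]]]]]]]]]].
    fold C in w5. split; [|lra].
    rewrite HD0 in w2. replace (Eb - 0 * s1 Sb) with Eb in w2 by ring.
    rewrite <- w2. transitivity ((s0 Sb * (Eb - g*u)) * (1 + d*s1 Sb)); [ring|].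
    rewrite u3, Rmult_assoc, u1. ring. }
  assert (hlF : 0 < l*Fb) by nra.
  split.
  { intros A. set (A' := Rmax 0 A).
    assert (hA : A <= A' /\ 0 <= A') by (split; [apply Rmax_r|apply Rmax_l]).
    exists (Rmax 0 (C + (l*Fb+Eb)*A'/Eb)). intros x Hx.
    apply Rmax_Rlt in Hx. destruct Hx as [Hx1 Hx2].
    destruct (sb x Hx1) as [e1 e2].
    assert (k : (l*Fb+Eb)*A' < Eb * (x - C)).
    { replace ((l*Fb+Eb)*A') with (((l*Fb+Eb)*A'/Eb)*Eb) by (field; lra). nra. }
    assert (k2 : (l*Fb+Eb)*A' < (l*Fb+Eb) * s1 x) by nra.
    assert (A' < s1 x) by nra. lra. }
  intros A. set (A' := Rmax 0 A).
  assert (hA : A <= A' /\ 0 <= A') by (split; [apply Rmax_r|apply Rmax_l]).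
  exists (Rmax 0 (C + (l*Fb+Eb)*A'/(l*Fb))). intros x Hx.
  apply Rmax_Rlt in Hx. destruct Hx as [Hx1 Hx2].
  destruct (sb x Hx1) as [e1 e2].
  assert (k : (l*Fb+Eb)*A' < (l*Fb) * (x - C)).
  { replace ((l*Fb+Eb)*A') with (((l*Fb+Eb)*A'/(l*Fb))*(l*Fb)) by (field; lra). nra. }
  assert (k2 : (l*Fb+Eb)*A' < (l*Fb+Eb) * s0 x) by nra.
  assert (A' < s0 x) by nra. lra.
Qed.
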